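(* Let $\mathbf{s}$ be a linearly recurrent sequence over $\{0,1\}$. Then for every integer $k\ge1$, $C_{2k}(\mathbf{s},N)\gg N$, i.e., there is a constant $c>0$ (depending on $\mathbf{s}$ and $k$) such that $C_{2k}(\mathbf{s},N)\ge cN$ for all sufficiently large $N$.
   Context: A sequence $\mathbf{s}$ is linearly recurrent if there is a constant $C>0$ such that every factor (finite block) of $\mathbf{s}$ occurs infinitely often and the distance between two consecutive occurrences of any length-$n$ factor of $\mathbf{s}$ is at most $Cn$. Correlation measure: for $\mathbf{s}$ over $\{0,1\}$, an integer $k\ge1$, $D=(d_1,\dots,d_k)\in\mathbb{N}^k$ with $0\le d_1<\cdots<d_k$ and $M\in\mathbb{N}$, put $V(\mathbf{s},M,D)=\sum_{n=0}^{M-1}(-1)^{\mathbf{s}(n+d_1)+\cdots+\mathbf{s}(n+d_k)}$, and $C_k(\mathbf{s},N)=\max_{M,D}|V(\mathbf{s},M,D)|$ over all such $D$ and integers $M$ with $M+d_k\le N$. *)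

(* Defs.v *)
From HB Require Import structures.
From mathcomp Require Import all_boot all_order all_algebra.
From mathcomp Require Import reals.
Set Implicit Arguments. Unset Strict Implicit. Unset Printing Implicit Defensive.
Import Order.TTheory GRing.Theory Num.Theory.

(* A binary sequence s : nat -> bool (true = 1, false = 0). *)

Definition occurs_at (s : nat -> bool) (i n j : nat) : Prop :=
  forall t : nat, (t < n)%N -> s (j + t)%N = s (i + t)%N.

Definition linearly_recurrent (R : realType) (s : nat -> bool) : Prop :=
  exists C : R, (0 < C)%R /\
    (forall i n m : nat, exists j : nat, (m <= j)%N /\ occurs_at s i n j) /\
    (forall i n j j' : nat, (0 < n)%N ->
       occurs_at s i n j -> occurs_at s i n j' -> (j < j')%N ->
       (forall l : nat, (j < l < j')%N -> ~ occurs_at s i n l) ->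
       (((j' - j)%N%:R : R) <= C * n%:R)%R).

Definition corrV (s : nat -> bool) (M : nat) (D : seq nat) : int :=
  (\sum_(n < M) (-1) ^+ (\sum_(d <- D) (s (n + d)%N : nat)))%R.

(* C_k(s, N) = max |V(s,M,D)| over D = {d_1 < ... < d_k} (a k-element set of
   naturals) and M with M + d_k <= N (so all d_i <= N). *)
Definition corrC (k : nat) (s : nat -> bool) (N : nat) : nat :=
  \max_(D : {set 'I_N.+1} | #|D| == k)
    \max_(M < N.+1 | (M + \max_(d in D) (d : nat) <= N)%N)
      `|corrV s M [seq (val d) | d <- enum D]|%N.

(* Main.v *)
Require Import Defs.
From HB Require Import structures.
From mathcomp Require Import all_boot all_order all_algebra.
From mathcomp Require Import reals.
From mathcomp Require Import zify.
Import Order.TTheory GRing.Theory Num.Theory.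

Lemma sum_D (N k q : nat) (F : nat -> nat) : (k <= q)%N -> (q + k <= N.+1)%N ->
  (\sum_(i in [set i : 'I_N.+1 | (i < k)%N || (q <= i < q + k)%N]) F i =
   \sum_(x < k) (F x + F (q + x)%N))%N.
Proof.
move=> kq qkN.
pose P := fun i : nat => (i < k)%N || (q <= i < q + k)%N.
rewrite (eq_bigl (fun i : 'I_N.+1 => P i)); last by move=> i; rewrite inE.
rewrite big_mkcond /=.
rewrite -(big_mkord xpredT (fun i => if P i then F i else 0%N)).
rewrite (big_cat_nat _ (n:=k)) //=; last by lia.
rewrite (big_cat_nat _ (m:=k) (n:=q)) //=; last by lia.
rewrite (big_cat_nat _ (m:=q) (n:=q+k)) //=; last by lia.
rewrite [X in (_ + (X + _))%N]big_nat_cond [X in (_ + (X + _))%N]big1; last first.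
  move=> i /andP[/andP [H1 H2] _]; rewrite /P; case: ifP => //; lia.
rewrite [X in (_ + (_ + (_ + X)))%N]big_nat_cond [X in (_ + (_ + (_ + X)))%N]big1; last first.
  move=> i /andP[/andP [H1 H2] _]; rewrite /P; case: ifP => //; lia.
rewrite add0n addn0.
rewrite (eq_big_nat _ _ (F2 := F)); last by move=> i Hi; rewrite /P; case: ifP => //; lia.
rewrite [X in (_ + X)%N](eq_big_nat _ _ (F2 := F)); last first.
  by move=> i Hi; rewrite /P; case: ifP => //; lia.
rewrite -{1}(add0n q) big_addn.
rewrite (_ : (q + k - q = k)%N); last by lia.
rewrite -big_split /= big_mkord; apply: eq_bigr => i _; by rewrite (addnC i).
Qed.

Definition occb (s : nat -> bool) (L j : nat) : bool :=
  all (fun t => s (j + t)%N == s t) (iota 0 L).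

Lemma occbP s L j : reflect (occurs_at s 0 L j) (occb s L j).
Proof.
apply: (iffP allP) => H.
  move=> t tL; have := H t; rewrite mem_iota add0n => /(_ tL) /eqP ->//.
move=> t; rewrite mem_iota add0n => /andP[_ tL]; apply/eqP; exact: H.
Qed.

Lemma period (s : nat -> bool) L p : (forall t, (t < L)%N -> s (p + t)%N = s t) ->
  forall i t, (t + i * p < L + p)%N -> s (t + i * p)%N = s t.
Proof.
move=> H; elim=> [|i IH] t Ht; first by rewrite mul0n addn0.
rewrite mulSn (addnC p) addnA addnC H; last by lia.
apply: IH; lia.
Qed.

Theorem mainTheorem2 (R : realType) (s : nat -> bool) :
  linearly_recurrent R s ->
  forall k : nat, (1 <= k)%N ->
    exists c : R, (0 < c)%R /\
      exists N0 : nat, forall N : nat, (N0 <= N)%N ->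
        (c * N%:R <= (corrC (2 * k) s N)%:R)%R.
Proof.
move=> [C [C0 [Hinf Hgap]]] k k1.
set K := Num.Def.archi_bound C.
have CK : (C < K%:R)%R by apply: archi_boundP; exact: ltW.
have Kpos : (0 < (2 * (K + 1))%N%:R :> R)%R by rewrite ltr0n; lia.
exists ((2 * (K + 1))%N%:R^-1)%R; split; first by rewrite invr_gt0.
exists ((K + 1) * (2 * (k * k + k) + 1))%N => N HN.
set L := (N %/ (K + 1))%N.
have HL : (2 * (k * k + k) + 1 <= L)%N.
  have := leq_div2r (K + 1) HN; rewrite mulKn //; lia.
have HNL : (L * (K + 1) <= N)%N by rewrite /L leq_trunc_div.
have HNL2 : (N < (L + 1) * (K + 1))%N.
  by rewrite /L addn1 ltn_ceil.
set M := (L - (k * k + k))%N.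
have HMN : (N <= 2 * (K + 1) * M)%N by rewrite /M; nia.
have exP : exists j, (0 < j)%N && occb s L j.
  have [j [j1 /occbP Hj]] := Hinf 0%N L 1%N; exists j; rewrite Hj andbT; lia.
case: (ex_minnP exP) => p /andP[p0 /occbP Hp] pmin.
have pKL : (p <= K * L)%N.
  have := Hgap 0%N L 0%N p ltac:(lia) ltac:(by move=> t) Hp p0.
  move=> /(_ _) H.
  have {}H : ((p - 0)%N%:R <= C * L%:R :> R)%R.
    apply: H => l /andP[l0 lp] /occbP Hl.
    have := pmin l; rewrite l0 Hl => /(_ isT); lia.
  rewrite subn0 in H.
  rewrite -(ler_nat R) natrM; apply: (le_trans H).
  by rewrite ler_wpM2r // ltW.
have Hper : forall t, (t < L)%N -> s (p + t)%N = s t.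
  by move=> t tL; rewrite Hp.
set q := if (p < k)%N then (k * p)%N else p.
have kq : (k <= q)%N by rewrite /q; case: ifP => H //; nia.
have qb : (q <= K * L + k * k)%N by rewrite /q; case: ifP => H; nia.
have Hq : forall t, (t + k * k < L)%N -> s (q + t)%N = s t.
  move=> t Ht; rewrite /q; case: ifP => H.
    by rewrite addnC (@period s L p Hper) //; nia.
  apply: Hper; lia.
have Mle : (M <= corrC (2 * k) s N)%N.
  pose D := [set i : 'I_N.+1 | (i < k)%N || (q <= i < q + k)%N].
  have qkN : (q + k <= N.+1)%N by nia.
  have cD : #|D| == (2 * k)%N.
    rewrite -sum1_card (@sum_D N k q (fun _ => 1%N)) //.
    by rewrite sum_nat_const card_ord; apply/eqP; lia.
  have MN : (M < N.+1)%N by nia.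
  have maxD : (M + \max_(d in D) (d : nat) <= N)%N.
    have : (\max_(d in D) (d : nat) <= q + k - 1)%N.
      by apply/bigmax_leqP => i; rewrite inE; lia.
    nia.
  rewrite /corrC; apply: leq_trans (leq_bigmax_cond D cD).
  apply: leq_trans (leq_bigmax_cond (Ordinal MN) maxD) => /=.
  rewrite /corrV (eq_bigr (fun _ => 1%R)); last first.
    move=> n _; rewrite big_map big_enum /=.
    rewrite (@sum_D N k q (fun d => s (n + d)%N)) //.
    rewrite (eq_bigr (fun x : 'I_k => 2 * s (n + x)%N)%N); last first.
      move=> x _; rewrite [(n + (q + x))%N]addnCA Hq; first by rewrite mul2n addnn.
      have := ltn_ord x; have := ltn_ord n; lia.
    by rewrite -big_distrr /= exprM sqrrN expr1n.
  by rewrite sumr_const card_ord natz.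
apply: (le_trans (y := (M%:R)%R)); last by rewrite ler_nat.
rewrite -[leRHS](mulKf (lt0r_neq0 Kpos)).
apply: ler_wpM2l; first by rewrite invr_ge0 ltW.
by rewrite -natrM ler_nat.
Qed.
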